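(* Let $\mathcal{C}=(\mathcal{T},\mathcal{I},\mathcal{R})$ be an extraction context with thresholds \textit{minsupp} and \textit{minbond}. Then $\mathcal{MM}ax\mathcal{CR}=\mathcal{MRCP}\cup\mathcal{M}ax\mathcal{CRCP}$, with each element $J$ recorded together with $\mathit{Supp}(\wedge J)$ and $\mathit{bond}(J)$, is an exact concise representation of the set $\mathcal{RCP}$ of rare correlated patterns.
   Context: An extraction context is a triple $\mathcal{C}=(\mathcal{T},\mathcal{I},\mathcal{R})$ with $\mathcal{T}$ a finite set of transactions, $\mathcal{I}$ a finite set of items and $\mathcal{R}\subseteq\mathcal{T}\times\mathcal{I}$. For a pattern $I\subseteq\mathcal{I}$: $\mathit{Supp}(\wedge I)=|\{t:\forall i\in I,(t,i)\in\mathcal{R}\}|$, $\mathit{Supp}(\vee I)=|\{t:\exists i\in I,(t,i)\in\mathcal{R}\}|$, and for nonempty $I$, $\mathit{bond}(I)=\mathit{Supp}(\wedge I)/\mathit{Supp}(\vee I)$ (with $\mathit{bond}(\emptyset)=+\infty$ by convention). $\mathcal{CP}=\{I:\mathit{bond}(I)\ge\textit{minbond}\}$; $\mathcal{RCP}=\{I\in\mathcal{CP}:\mathit{Supp}(\wedge I)<\textit{minsupp}\}$. $\mathcal{CRCP}=\{I\in\mathcal{RCP}:\forall I_1\supsetneq I,\ \mathit{bond}(I)>\mathit{bond}(I_1)\}$; $\mathcal{MRCP}=\{I\in\mathcal{RCP}:\forall I_1\subsetneq I,\ \mathit{bond}(I)<\mathit{bond}(I_1)\}$. Maximal correlated patterns: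 $\mathcal{M}ax\mathcal{CP}=\{I\in\mathcal{CP}:\forall I_1\supsetneq I,\ \mathit{bond}(I_1)<\textit{minbond}\}$. $\mathcal{M}ax\mathcal{CRCP}=\mathcal{CRCP}\cap\mathcal{M}ax\mathcal{CP}$. A family $\mathcal{S}\subseteq\mathcal{RCP}$, with each $J\in\mathcal{S}$ recorded together with $\mathit{Supp}(\wedge J)$ and $\mathit{bond}(J)$, is an exact concise representation of $\mathcal{RCP}$ if, for every pattern $I\subseteq\mathcal{I}$, the recorded data alone suffice to decide whether $I\in\mathcal{RCP}$ and, when $I\in\mathcal{RCP}$, to determine exactly $\mathit{Supp}(\wedge I)$ and $\mathit{bond}(I)$. *)

(* Defs.v *)
From mathcomp Require Import all_boot all_order all_algebra.
Set Implicit Arguments. Unset Strict Implicit. Unset Printing Implicit Defensive.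
Import Order.TTheory GRing.Theory Num.Theory.
Local Open Scope ring_scope.

(* Extended rationals: [None] stands for +oo, [Some q] for the finite value q. *)
Definition ext_le (a b : option rat) : bool :=
  match a, b with
  | _, None => true
  | None, Some _ => false
  | Some x, Some y => x <= y
  end.

Definition ext_lt (a b : option rat) : bool :=
  match a, b with
  | None, _ => false
  | Some _, None => true
  | Some x, Some y => x < y
  end.

Section ExtractionContext.
Variables (Tr Item : finType) (Rel : {set Tr * Item}).

Definition supp_conj (X : {set Item}) : nat :=
  #|[set t : Tr | [forall i in X, (t, i) \in Rel]]|.

Definition supp_disj (X : {set Item}) : nat :=
  #|[set t : Tr | [exists i in X, (t, i) \in Rel]]|.

(* bond(empty) = +oo; otherwise Supp(/\X) / Supp(\/X) (MathComp: x / 0 = 0). *)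
Definition bond (X : {set Item}) : option rat :=
  if X == set0 then None
  else Some ((supp_conj X)%:R / (supp_disj X)%:R).

Variables (minsupp : nat) (minbond : rat).

Definition CP : {set {set Item}} :=
  [set X : {set Item} | ext_le (Some minbond) (bond X)].

Definition RCP : {set {set Item}} :=
  [set X in CP | (supp_conj X < minsupp)%N].

Definition CRCP : {set {set Item}} :=
  [set X in RCP | [forall X1 : {set Item}, (X \proper X1) ==> ext_lt (bond X1) (bond X)]].

Definition MRCP : {set {set Item}} :=
  [set X in RCP | [forall X1 : {set Item}, (X1 \proper X) ==> ext_lt (bond X) (bond X1)]].

Definition MaxCP : {set {set Item}} :=
  [set X in CP | [forall X1 : {set Item}, (X \proper X1) ==> ext_lt (bond X1) (Some minbond)]].

Definition MaxCRCP : {set {set Item}} := CRCP :&: MaxCP.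

Definition MMaxCR : {set {set Item}} := MRCP :|: MaxCRCP.

Definition record (S : {set {set Item}}) (J : {set Item}) : option (nat * option rat) :=
  if J \in S then Some (supp_conj J, bond J) else None.

End ExtractionContext.

Definition exact_concise_rep (Item : finType) (minsupp : nat) (minbond : rat)
  (S : forall Tr : finType, {set Tr * Item} -> {set {set Item}}) : Prop :=
  (forall (Tr : finType) (Rel : {set Tr * Item}),
      S Tr Rel \subset RCP Rel minsupp minbond) /\
  exists dec : ({set Item} -> option (nat * option rat)) ->
               {set Item} -> option (nat * option rat),
    forall (Tr : finType) (Rel : {set Tr * Item}) (X : {set Item}),
      dec (record Rel (S Tr Rel)) X =
      (if X \in RCP Rel minsupp minbond
       then Some (supp_conj Rel X, bond Rel X) else None).

(* Main.v *)
Require Import Defs.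
From mathcomp Require Import all_boot all_order all_algebra.
From mathcomp Require Import zify.
Set Implicit Arguments. Unset Strict Implicit. Unset Printing Implicit Defensive.
Import Order.TTheory GRing.Theory Num.Theory.

Section Aux.
Variables (Tr Item : finType) (Rel : {set Tr * Item}).

Lemma bond0 : bond Rel set0 = None.
Proof. by rewrite /bond eqxx. Qed.
Lemma bondN X : X != set0 -> bond Rel X = Some ((supp_conj Rel X)%:R / (supp_disj Rel X)%:R)%R.
Proof. by move=> h; rewrite /bond (negbTE h). Qed.

Lemma conj_anti (X Y : {set Item}) : X \subset Y ->
  (supp_conj Rel Y <= supp_conj Rel X)%N.
Proof.
move=> XY; apply: subset_leq_card; apply/subsetP => t; rewrite !inE.
move=> /forallP H; apply/forallP => i; apply/implyP => iX.
exact: (implyP (H i)) (subsetP XY i iX).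
Qed.

Lemma disj_mono (X Y : {set Item}) : X \subset Y ->
  (supp_disj Rel X <= supp_disj Rel Y)%N.
Proof.
move=> XY; apply: subset_leq_card; apply/subsetP => t; rewrite !inE.
case/existsP => i /andP [iX H]; apply/existsP; exists i.
by rewrite (subsetP XY i iX).
Qed.

Lemma conj_le_disj (X : {set Item}) : X != set0 ->
  (supp_conj Rel X <= supp_disj Rel X)%N.
Proof.
case/set0Pn => i iX; apply: subset_leq_card; apply/subsetP => t; rewrite !inE.
move=> /forallP H; apply/existsP; exists i; by rewrite iX (implyP (H i)).
Qed.

Lemma bond_anti (X Y : {set Item}) : X \subset Y ->
  ext_le (bond Rel Y) (bond Rel X).
Proof.
move=> XY.
have [X0|X0] := eqVneq X set0; first by rewrite X0 bond0; case: (bond Rel Y).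
have Y0 : Y != set0.
  apply: contraNneq X0 => Y0; by move: XY; rewrite Y0 subset0.
rewrite (bondN X0) (bondN Y0) /=.
have h1 := conj_anti XY; have h2 := disj_mono XY; have h3 := conj_le_disj X0.
set cX := supp_conj Rel X in h1 h3 *; set cY := supp_conj Rel Y in h1 *.
set dX := supp_disj Rel X in h2 h3 *; set dY := supp_disj Rel Y in h2 *.
have [dX0|dXp] := posnP dX.
  have cX0 : cX = 0%N by lia.
  have cY0 : cY = 0%N by lia.
  by rewrite cY0 cX0 !mul0r.
have dYp : (0 < dY)%N by lia.
rewrite ler_pdivrMr ?ltr0n // mulrAC ler_pdivlMr ?ltr0n //.
rewrite -!natrM ler_nat; apply: leq_mul => //.
Qed.

Lemma bond_eq_conj (X Y : {set Item}) : X \subset Y ->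
  bond Rel X = bond Rel Y -> supp_conj Rel X = supp_conj Rel Y.
Proof.
move=> XY.
have [Y0|Y0] := eqVneq Y set0.
  by move: XY; rewrite Y0 subset0 => /eqP ->.
have [X0|X0] := eqVneq X set0; first by rewrite X0 bond0 (bondN Y0).
rewrite (bondN Y0) (bondN X0) => -[E].
have h1 := conj_anti XY; have h2 := disj_mono XY; have h3 := conj_le_disj X0.
have h4 := conj_le_disj Y0.
move: E h1 h2 h3 h4.
set cX := supp_conj Rel X; set cY := supp_conj Rel Y.
set dX := supp_disj Rel X; set dY := supp_disj Rel Y => E h1 h2 h3 h4.
have [cX0|cXp] := posnP cX; first by lia.
have dXp : (0 < dX)%N by lia.
have dYp : (0 < dY)%N by lia.
move/eqP: E; rewrite eqr_div ?pnatr_eq0 -?lt0n // -!natrM eqr_nat => /eqP E.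
nia.
Qed.

End Aux.

Lemma ext_le_anti a b : ext_le a b -> ext_le b a -> a = b.
Proof.
case: a => [x|]; case: b => [y|] //= h1 h2; congr Some; apply/eqP.
by rewrite eq_le h1 h2.
Qed.

Lemma ext_le_lt a b : ext_le a b -> a != b -> ext_lt a b.
Proof.
case: a => [x|]; case: b => [y|] //= h1 h2.
by rewrite lt_neqAle h1 andbT; apply: contra h2 => /eqP ->.
Qed.

Lemma ext_le_trans a b c : ext_le a b -> ext_le b c -> ext_le a c.
Proof.
case: a => [x|]; case: b => [y|]; case: c => [z|] //=; exact: le_trans.
Qed.

Definition rb (r : option (nat * option rat)) : option rat :=
  if r is Some (_, b) then b else None.

Definition decF (Item : finType) (r : {set Item} -> option (nat * option rat))
  (X : {set Item}) : option (nat * option rat) :=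
  if [exists J, (r J != None) && (X \subset J)] then
    match [pick K : {set Item} | [&& K \subset X, r K != None &
        [forall K' : {set Item}, ((K' \subset X) && (r K' != None)) ==> ext_le (rb (r K)) (rb (r K'))]]] with
    | Some K => r K
    | None => None
    end
  else None.

Theorem mainTheorem6 (Item : finType) (minsupp : nat) (minbond : rat) :
  exact_concise_rep minsupp minbond
    (fun (Tr : finType) (Rel : {set Tr * Item}) => MMaxCR Rel minsupp minbond).
Proof.
have sub : forall (Tr : finType) (Rel : {set Tr * Item}),
    MMaxCR Rel minsupp minbond \subset RCP Rel minsupp minbond.
  move=> Tr Rel; apply/subsetP => X; rewrite /MMaxCR /MaxCRCP /MRCP /CRCP.
  by case/setUP => [/setIdP[]|/setIP[]/setIdP[]].
split => //; exists (@decF Item) => Tr Rel X.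
set S := MMaxCR Rel minsupp minbond.
have recE : forall K : {set Item}, (record Rel S K != None) = (K \in S).
  by move=> K; rewrite /record; case: (K \in S).
have inRCP : forall K : {set Item}, K \in S -> K \in RCP Rel minsupp minbond.
  by move=> K; apply: (subsetP (sub Tr Rel)).
rewrite /decF.
have [XR|XnR] := boolP (X \in RCP Rel minsupp minbond).
- move/setIdP: (XR) => [XCP Xrare].
  have PX : (X \subset X) && (X \in CP Rel minbond) by rewrite subxx XCP.
  case: (@arg_maxnP _ X (fun J : {set Item} => (X \subset J) && (J \in CP Rel minbond)) (fun J : {set Item} => #|J|) PX) => J /andP [XJ JCP] Jmax.
  have JS : J \in S.
    apply/setUP; right.
    have Jrare : (supp_conj Rel J < minsupp)%N.
      exact: leq_ltn_trans (conj_anti Rel XJ) Xrare.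
    have hmax : forall X1 : {set Item}, J \proper X1 -> ext_lt (bond Rel X1) (Some minbond).
      move=> X1 JX1.
      have X1nCP : X1 \notin CP Rel minbond.
        apply/negP => X1CP.
        have := Jmax X1; rewrite (subset_trans XJ (proper_sub JX1)) X1CP => /(_ isT) /=.
        by rewrite leqNgt proper_card.
      move: X1nCP; rewrite inE.
      have [X10|X10] := eqVneq X1 set0.
        by move: (proper_card JX1); rewrite X10 cards0.
      by rewrite (bondN _ X10) /= -ltNge.
    have JR : J \in RCP Rel minsupp minbond by apply/setIdP.
    apply/setIP; split; apply/setIdP; split => //; apply/forallP => X1;
      apply/implyP => JX1; last exact: hmax.
    move: JCP; rewrite inE => JCP.
    have := hmax X1 JX1; case: (bond Rel X1) => [b|] //=.
    by move: JCP; case: (bond Rel J) => [c|] //= h1 h2; exact: lt_le_trans h2 h1.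
  have -> : [exists J0, (record Rel S J0 != None) && (X \subset J0)].
    by apply/existsP; exists J; rewrite recE JS.
  have PK : (X \subset X) && (bond Rel X == bond Rel X) by rewrite subxx eqxx.
  case: (@arg_minnP _ X (fun K : {set Item} => (K \subset X) && (bond Rel K == bond Rel X)) (fun K : {set Item} => #|K|) PK) => K0 /andP [K0X /eqP bK0] K0min.
  have K0S : K0 \in S.
    apply/setUP; left.
    have sK0 := bond_eq_conj K0X bK0.
    apply/setIdP; split.
      apply/setIdP; split; last by rewrite sK0.
      by move: XCP; rewrite !inE bK0.
    apply/forallP => X1; apply/implyP => X1K0.
    apply: ext_le_lt; first exact: bond_anti (proper_sub X1K0).
    apply/eqP => E.
    have := K0min X1; rewrite (subset_trans (proper_sub X1K0) K0X) -bK0 E eqxx.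
    by move=> /(_ isT) /=; rewrite leqNgt proper_card.
  have recS : forall K : {set Item}, K \in S -> record Rel S K = Some (supp_conj Rel K, bond Rel K).
    by move=> K KS; rewrite /record KS.
  case: pickP => [K /and3P [KX KS /forallP Kmin]|].
  + rewrite recE in KS; rewrite recS //.
    have := Kmin K0; rewrite K0X recE K0S /= recS // recS //= => h.
    have bK : bond Rel K = bond Rel X.
      apply: ext_le_anti; first by rewrite -bK0.
      exact: bond_anti.
    by rewrite (bond_eq_conj KX bK) bK.
  + move=> /(_ K0); rewrite K0X recE K0S /=.
    move/negbT/negP; case; apply/forallP => K'; apply/implyP => /andP [K'X].
    rewrite recE => K'S; rewrite !recS //= bK0; exact: bond_anti.
- case: ifP => // /existsP [J /andP [JS XJ]].
  rewrite recE in JS.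
  case: pickP => // K /and3P [KX KS _].
  rewrite recE in KS; exfalso; move/negP: XnR; apply.
  move: (inRCP J JS) (inRCP K KS); rewrite !inE => /andP [JCP _] /andP [_ Krare].
  rewrite (leq_ltn_trans (conj_anti Rel KX) Krare) andbT.
  exact: ext_le_trans JCP (bond_anti Rel XJ).
Qed.
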